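(* Let $\{\varphi_n\},\{\psi_n\}$ be biorthogonal sequences in a Hilbert space $\mathcal H$ forming a $(\mathcal D,\mathcal E)$-quasi basis for dense subspaces $\mathcal D,\mathcal E$ with $D_\psi\subseteq\mathcal D\subseteq D(\varphi)$, $D_\varphi\subseteq\mathcal E\subseteq D(\psi)$. Let $\{f_n\}$ be an ONB such that $T_\varphi:=\overline{T_{f,\varphi}|_{\mathcal D}}$ is positive self-adjoint and $(\{f_n\},T_\varphi)$ is a constructing pair for $\{\varphi_n\}$, and let $\{g_n\}$ be an ONB such that $T_\psi:=\overline{T_{g,\psi}|_{\mathcal E}}$ is positive self-adjoint and $(\{g_n\},T_\psi)$ is a constructing pair for $\{\psi_n\}$. Then: (1) If $H_f^\alpha\mathcal D\subseteq\mathcal D$ (i.e. $\mathcal D\subseteq D(H_f^\alpha)$ and $H_f^\alpha$ maps $\mathcal D$ into $\mathcal D$) for some complex sequence $\alpha=\{\alpha_n\}$, then the linear span of $T_\varphi\mathcal D$ is dense in $\mathcal H$ and the non-self-adjoint Hamiltonian $T_\varphi H_f^\alpha T_\varphi^{-1}$ belongs to $\mathcal L(T_\varphi\mathcal D)$ (i.e. $T_\varphi\mathcal D$ is contained in its domain and is mapped into itself by it). (2) If $H_g^\alpha\mathcal E\subseteq\mathcal E$ for some complex sequence $\alpha=\{\alpha_n\}$, then the linear span of $T_\psi\mathcal E$ is dense in $\mathcal H$ and the non-self-adjoint Hamiltonian $T_\psi H_g^\alpha T_\psi^{-1}$ belongs to $\mathcal L(T_\psi\mathcal E)$.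
   Context: Inner product linear in the first argument. Biorthogonal: $\langle\varphi_n,\psi_m\rangle=\delta_{nm}$. $D_\varphi,D_\psi$ are the linear spans; $D(\varphi)=\{x:\sum_n|\langle x,\varphi_n\rangle|^2<\infty\}$, similarly $D(\psi)$. The pair is a $(\mathcal D,\mathcal E)$-quasi basis if $\sum_k\langle x,\varphi_k\rangle\langle\psi_k,y\rangle=\langle x,y\rangle$ for all $x\in\mathcal D$, $y\in\mathcal E$. For an ONB $\{f_n\}$, $T_{f,\varphi}$ is the operator with domain $D(\varphi)$, $T_{f,\varphi}x=\sum_n\langle x,\varphi_n\rangle f_n$ (similarly $T_{g,\psi}$ on $D(\psi)$); bar is closure, $|$ is restriction. A constructing pair for $\{\chi_n\}$ is $(\{f_n\},S)$ with $\{f_n\}$ an ONB, $S$ densely defined closed with densely defined inverse, $f_n\in D(S)\cap D((S^{-1})^* )$, $Sf_n=\chi_n$. (Such ONBs $\{f_n\},\{g_n\}$ always exist under the quasi-basis hypothesis.) For an ONB $\{f_n\}$ and $\alpha=\{\alpha_n\}\subset\mathbb C$, $H_f^\alpha=\sum_n\alpha_n f_n\otimes\bar f_n$, i.e. $H_f^\alpha x=\sum_n\alpha_n\langle x,f_n\rangle f_n$ on $D(H_f^\alpha)=\{x:\sum_n|\alpha_n|^2|\langle x,f_n\rangle|^2<\infty\}$. For a dense subspace $\mathcal D_0$, $\mathcal L(\mathcal D_0)$ is the algebra of linear operators from $\mathcal D_0$ into $\mathcal D_0$. *)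

(* Defs.v *)
(* abstract complex Hilbert space over R[i] (R : realType),
   unbounded operators represented by their graphs. *)
From HB Require Import structures.
From mathcomp Require Import all_boot all_order all_algebra.
From mathcomp Require Import complex.
From mathcomp Require Import reals.
Set Implicit Arguments. Unset Strict Implicit. Unset Printing Implicit Defensive.
Import Order.TTheory GRing.Theory Num.Theory.
Local Open Scope ring_scope.

Section HilbertDefs.
Variables (C : numClosedFieldType) (H : lmodType C) (ip : H -> H -> C).

Definition is_inner_product : Prop :=
  (forall (a : C) (x y z : H), ip (a *: x + y) z = a * ip x z + ip y z) /\
  (forall x y : H, ip y x = (ip x y)^*) /\
  (forall x : H, 0 <= ip x x) /\
  (forall x : H, ip x x = 0 -> x = 0).

Definition hnorm (x : H) : C := sqrtC (ip x x).

(* convergence of vectors / scalars; epsilons are positive reals in C *)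
Definition hcvg (u : nat -> H) (l : H) : Prop :=
  forall e : C, 0 < e -> exists N : nat, forall n, (N <= n)%N -> hnorm (u n - l) < e.

Definition ccvg (s : nat -> C) (l : C) : Prop :=
  forall e : C, 0 < e -> exists N : nat, forall n, (N <= n)%N -> `|s n - l| < e.

Definition hcomplete : Prop :=
  forall u : nat -> H,
    (forall e : C, 0 < e -> exists N : nat, forall n m, (N <= n)%N -> (N <= m)%N ->
        hnorm (u n - u m) < e) ->
    exists l, hcvg u l.

Definition has_sumH (v : nat -> H) (y : H) : Prop :=
  hcvg (fun n => \sum_(i < n) v i) y.

Definition has_sumC (s : nat -> C) (l : C) : Prop :=
  ccvg (fun n => \sum_(i < n) s i) l.

Definition sq_summable (c : nat -> C) : Prop :=
  exists M : C, forall n, \sum_(i < n) `|c i| ^+ 2 <= M.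

Definition subspace (S : H -> Prop) : Prop :=
  S 0 /\ forall (a : C) x y, S x -> S y -> S (a *: x + y).

Definition hdense (S : H -> Prop) : Prop :=
  forall (x : H) (e : C), 0 < e -> exists y, S y /\ hnorm (x - y) < e.

Definition hspan (S : H -> Prop) (x : H) : Prop :=
  exists (n : nat) (c : 'I_n -> C) (v : 'I_n -> H),
    (forall i, S (v i)) /\ x = \sum_(i < n) c i *: v i.

Definition seq_span (u : nat -> H) : H -> Prop := hspan (fun x => exists n, x = u n).

Definition is_ONB (f : nat -> H) : Prop :=
  (forall n m, ip (f n) (f m) = (n == m)%:R) /\
  (forall x, (forall n, ip x (f n) = 0) -> x = 0).

Definition biorthogonal (phi psi : nat -> H) : Prop :=
  forall n m, ip (phi n) (psi m) = (n == m)%:R.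

Definition Dseq (phi : nat -> H) (x : H) : Prop := sq_summable (fun n => ip x (phi n)).

Definition quasi_basis (phi psi : nat -> H) (D E : H -> Prop) : Prop :=
  forall x y, D x -> E y -> has_sumC (fun k => ip x (phi k) * ip (psi k) y) (ip x y).

Definition op := H -> H -> Prop.
Definition dom (T : op) (x : H) : Prop := exists y, T x y.
Definition is_linop (T : op) : Prop :=
  (forall x y y', T x y -> T x y' -> y = y') /\ T 0 0 /\
  (forall (a : C) x y x' y', T x y -> T x' y' -> T (a *: x + x') (a *: y + y')).
Definition closure_op (T : op) : op := fun x y =>
  forall e : C, 0 < e -> exists x' y', T x' y' /\ hnorm (x - x') < e /\ hnorm (y - y') < e.
Definition closed_op (T : op) : Prop := forall x y, closure_op T x y -> T x y.
Definition hrestrict (T : op) (D : H -> Prop) : op := fun x y => D x /\ T x y.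
Definition inv_op (T : op) : op := fun x y => T y x.
Definition comp_op (A B : op) : op := fun x z => exists y, B x y /\ A y z.
Definition adjoint (T : op) : op := fun y z => forall x w, T x w -> ip w y = ip x z.
Definition selfadjoint (T : op) : Prop :=
  hdense (dom T) /\ forall x y, T x y <-> adjoint T x y.
Definition positive_op (T : op) : Prop := forall x y, T x y -> 0 <= ip y x.
Definition himage (T : op) (D : H -> Prop) (y : H) : Prop := exists x, D x /\ T x y.
Definition in_L (K : op) (S : H -> Prop) : Prop := forall x, S x -> exists y, K x y /\ S y.

Definition Tfphi (f phi : nat -> H) : op := fun x y =>
  Dseq phi x /\ has_sumH (fun n => ip x (phi n) *: f n) y.

Definition Hfa (f : nat -> H) (alpha : nat -> C) : op := fun x y =>
  sq_summable (fun n => alpha n * ip x (f n)) /\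
  has_sumH (fun n => (alpha n * ip x (f n)) *: f n) y.

Definition constructing_pair (chi f : nat -> H) (S : op) : Prop :=
  is_ONB f /\ is_linop S /\ hdense (dom S) /\ closed_op S /\
  (forall x x' y, S x y -> S x' y -> x = x') /\ hdense (dom (inv_op S)) /\
  (forall n, dom S (f n) /\ dom (adjoint (inv_op S)) (f n) /\ S (f n) (chi n)).

End HilbertDefs.

(* Main.v *)
Require Import Defs.
From HB Require Import structures.
From mathcomp Require Import all_boot all_order all_algebra.
From mathcomp Require Import complex.
From mathcomp Require Import classical_sets reals.
Import Order.TTheory GRing.Theory Num.Theory.
Local Open Scope ring_scope.

Section MCPsec.
Local Open Scope classical_set_scope.
Lemma MCP_Ri (R : realType) (a : nat -> R[i]) :
  (forall m n, (m <= n)%N -> a m <= a n) -> forall M, (forall n, a n <= M) ->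
  forall e, 0 < e -> exists N, forall m n, (N <= m)%N -> (m <= n)%N -> a n - a m < e.
Proof.
move=> mono M bnd e e0.
pose b n := complex.Re (a n).
have Imc n : complex.Im (a n) = complex.Im (a 0%N).
  by have := mono 0%N n (leq0n n); rewrite lecE => /andP[/eqP -> _].
have bmono m n : (m <= n)%N -> b m <= b n.
  by move=> /mono; rewrite lecE => /andP[_].
have bbnd n : b n <= complex.Re M by have := bnd n; rewrite lecE => /andP[_].
move: e0; rewrite ltcE => /andP[/eqP Ie Re0].
have hs : has_sup [set b n | n in [set: nat]].
  split; first by exists (b 0%N), 0%N.
  by exists (complex.Re M) => y [n _ <-].
have [y [N _ <-] hN] := sup_adherent Re0 hs.
exists N => m n Nm mn.
have ub : b n <= sup (range b) by apply: (sup_upper_bound hs); exists n.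
rewrite ltcE; apply/andP; split.
  have -> : complex.Im (a n - a m) = complex.Im (a n) - complex.Im (a m).
    by case: (a n) => [x1 y1]; case: (a m) => [x2 y2].
  by rewrite Imc (Imc m) subrr Ie.
have -> : complex.Re (a n - a m) = b n - b m.
  by rewrite /b; case: (a n) => [x1 y1]; case: (a m) => [x2 y2].
have h2 := bmono _ _ Nm.
have h3 : sup (range b) - b m < complex.Re e.
  by apply: le_lt_trans (_ : _ <= sup (range b) - b N) _; [rewrite lerD2l lerN2 | rewrite ltrBlDr -ltrBlDl].
by apply: le_lt_trans h3; rewrite lerD2r.
Qed.
End MCPsec.

Section Gen.
Variables (C : numClosedFieldType) (H : lmodType C) (ip : H -> H -> C).
Hypothesis Hip : is_inner_product ip.

Lemma ip0l z : ip 0 z = 0.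
Proof.
case: Hip => lin _.
have := lin 1 0 0 z; rewrite scaler0 addr0 mul1r => h.
by have := congr1 (fun t => t - ip 0 z) h; rewrite addrK subrr => ->.
Qed.
Lemma ipDl x y z : ip (x + y) z = ip x z + ip y z.
Proof. by case: Hip => lin _; rewrite -[x]scale1r lin mul1r scale1r. Qed.
Lemma ipZl a x z : ip (a *: x) z = a * ip x z.
Proof. by case: Hip => lin _; rewrite -[a *: x]addr0 lin ip0l addr0. Qed.
Lemma ipNl x z : ip (- x) z = - ip x z.
Proof. by rewrite -scaleN1r ipZl mulN1r. Qed.
Lemma ipBl x y z : ip (x - y) z = ip x z - ip y z.
Proof. by rewrite ipDl ipNl. Qed.
Lemma ipC x y : ip y x = (ip x y)^*.
Proof. by case: Hip => _ [h _]. Qed.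
Lemma ip0r z : ip z 0 = 0.
Proof. by rewrite ipC ip0l conjC0. Qed.
Lemma ipDr x y z : ip z (x + y) = ip z x + ip z y.
Proof. by rewrite [ip z x]ipC [ip z y]ipC ipC ipDl rmorphD. Qed.
Lemma ipZr a x z : ip z (a *: x) = a^* * ip z x.
Proof. by rewrite [ip z x]ipC ipC ipZl rmorphM. Qed.
Lemma ipNr x z : ip z (- x) = - ip z x.
Proof. by rewrite [ip z x]ipC ipC ipNl rmorphN. Qed.
Lemma ipBr x y z : ip z (x - y) = ip z x - ip z y.
Proof. by rewrite ipDr ipNr. Qed.
Lemma ipNN x : ip (- x) (- x) = ip x x.
Proof. by rewrite ipNl ipNr opprK. Qed.
Lemma ip_ge0 x : 0 <= ip x x.
Proof. by case: Hip => _ [_ [h _]]. Qed.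
Lemma ip_suml n (F : 'I_n -> H) z : ip (\sum_(i < n) F i) z = \sum_(i < n) ip (F i) z.
Proof. exact: (big_morph (fun u => ip u z) (fun x y => ipDl x y z) (ip0l z)). Qed.

Lemma hnorm0 : hnorm ip 0 = 0.
Proof. by rewrite /hnorm ip0l sqrtC0. Qed.
Lemma hnormN x : hnorm ip (- x) = hnorm ip x.
Proof. by rewrite /hnorm ipNN. Qed.
Lemma hnorm_ltE x e : 0 < e -> (hnorm ip x < e) = (ip x x < e ^+ 2).
Proof.
move=> e0; rewrite /hnorm -(ltr_pXn2r (n:=2)) //.
  by rewrite sqrtCK.
  by rewrite nnegrE sqrtC_ge0 ip_ge0.
by rewrite nnegrE ltW.
Qed.

Variable f : nat -> H.
Hypothesis ON : forall n m, ip (f n) (f m) = (n == m)%:R.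

Definition PS (c : nat -> C) N := \sum_(i < N) c i *: f i.

Lemma sum_delta (c : nat -> C) (N n : nat) :
  \sum_(i < N) c i * ((i : nat) == n)%:R = if (n < N)%N then c n else 0.
Proof.
elim: N => [|N IH]; first by rewrite big_ord0.
rewrite big_ord_recr /= IH.
case: (ltngtP n N) => h.
- by rewrite ltnS (ltnW h) mulr0 addr0.
- have h2 : (n < N.+1)%N = false by rewrite ltnNge h.
  by rewrite h2 mulr0 addr0.
- by rewrite h ltnSn mulr1 add0r.
Qed.

Lemma ip_PS_f c N n : ip (PS c N) (f n) = if (n < N)%N then c n else 0.
Proof.
rewrite /PS ip_suml -sum_delta; apply: eq_bigr => i _.
by rewrite ipZl ON.
Qed.

Lemma ip_PS_PS c d N : ip (PS c N) (PS d N) = \sum_(i < N) c i * (d i)^*.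
Proof.
rewrite {1}/PS ip_suml; apply: eq_bigr => i _.
by rewrite ipZl ipC ip_PS_f ltn_ord.
Qed.

Lemma ip_PS_norm c N : ip (PS c N) (PS c N) = \sum_(i < N) `|c i| ^+ 2.
Proof. by rewrite ip_PS_PS; apply: eq_bigr => i _; rewrite normCK. Qed.

Lemma sum_trunc (V : zmodType) (F : nat -> V) M N : (M <= N)%N ->
  \sum_(i < N) (if (M <= i)%N then F i else 0) = \sum_(i < N) F i - \sum_(i < M) F i.
Proof.
move=> MN.
rewrite -!(big_mkord xpredT) (big_cat_nat (n:=M)) // /=.
rewrite addrAC subrr add0r -(big_mkord xpredT (fun i => if (M <= i)%N then F i else 0)) (big_cat_nat (n:=M)) //=.
rewrite big1_seq; last first.
  by move=> i /andP[_]; rewrite mem_index_iota => /andP[_ iM]; rewrite leqNgt iM.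
rewrite add0r.
by apply: eq_big_nat => i /andP[-> _].
Qed.


Lemma sum_ge0 N (c : 'I_N -> C) : 0 <= \sum_(i < N) `|c i| ^+ 2.
Proof. by apply: sumr_ge0 => i _; rewrite exprn_ge0. Qed.

Lemma PS_diff (c : nat -> C) M N : (M <= N)%N ->
  PS c N - PS c M = PS (fun i => if (M <= i)%N then c i else 0) N.
Proof.
move=> MN; rewrite /PS -(@sum_trunc _ (fun i => c i *: f i)) //; apply: eq_bigr => i _.
by case: ifP => _ //; rewrite scale0r.
Qed.

Lemma A_diff (c : nat -> C) M N : (M <= N)%N ->
  \sum_(i < N) `|c i| ^+ 2 - \sum_(i < M) `|c i| ^+ 2 =
  \sum_(i < N) `|(if (M <= i)%N then c i else 0)| ^+ 2.
Proof.
move=> MN; rewrite -(@sum_trunc _ (fun i => `|c i| ^+ 2)) //; apply: eq_bigr => i _.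
by case: ifP => _ //; rewrite normr0 expr0n.
Qed.

Hypothesis Hcomplete : hcomplete ip.
Hypothesis MCP : forall a : nat -> C,
  (forall m n, (m <= n)%N -> a m <= a n) -> forall M, (forall n, a n <= M) ->
  forall e, 0 < e -> exists N, forall m n, (N <= m)%N -> (m <= n)%N -> a n - a m < e.

Lemma conv (c : nat -> C) : sq_summable c -> exists y, has_sumH ip (fun n => c n *: f n) y.
Proof.
case=> M HM; apply: Hcomplete => e e0.
pose a n := \sum_(i < n) `|c i| ^+ 2.
have amono m n : (m <= n)%N -> a m <= a n.
  by move=> mn; rewrite -subr_ge0 /a A_diff //; apply: sum_ge0.
have [N HN] := @MCP a amono M HM _ (exprn_gt0 2 e0).
have key m n : (N <= m)%N -> (m <= n)%N ->
    hnorm ip (\sum_(i < n) c i *: f i - \sum_(i < m) c i *: f i) < e.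
  move=> Nm mn; rewrite hnorm_ltE // (@PS_diff c m n mn) ip_PS_norm -A_diff //.
  exact: HN.
exists N => n m Nn Nm.
case: (leqP m n) => h; first exact: key.
by rewrite -hnormN opprB; apply: key => //; apply: ltnW.
Qed.

Lemma bessel x N : \sum_(i < N) `|ip x (f i)| ^+ 2 <= ip x x.
Proof.
pose c i := ip x (f i).
have hSx : ip (PS c N) x = \sum_(i < N) `|c i| ^+ 2.
  rewrite /PS ip_suml; apply: eq_bigr => i _.
  by rewrite ipZl normCK [ip (f i) x]ipC.
have hxS : ip x (PS c N) = \sum_(i < N) `|c i| ^+ 2.
  by rewrite ipC hSx geC0_conj //; apply: sum_ge0.
have := ip_ge0 (x - PS c N).
by rewrite ipBl !ipBr hSx hxS ip_PS_norm subrr subr0 subr_ge0.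
Qed.

Lemma coef_le x n : `|ip x (f n)| ^+ 2 <= ip x x.
Proof.
apply: le_trans (bessel x n.+1).
by rewrite big_ord_recr /= lerDr; apply: sum_ge0.
Qed.

Lemma small0 (z : C) : (forall e, 0 < e -> `|z| < e) -> z = 0.
Proof.
move=> h; apply/eqP; apply/negPn/negP => nz.
by have := h _ (eq_ind_r is_true nz (normr_gt0 z)); rewrite ltxx.
Qed.

Hypothesis ONB : forall x, (forall n, ip x (f n) = 0) -> x = 0.

Lemma approx x e : 0 < e ->
  exists N, hnorm ip (x - PS (fun i => ip x (f i)) N) < e.
Proof.
move=> e0; pose c i := ip x (f i).
have [s Hs] : exists s, has_sumH ip (fun n => c n *: f n) s.
  by apply: conv; exists (ip x x) => n; apply: bessel.
have xs : x = s.
  apply/eqP; rewrite -subr_eq0; apply/eqP; apply: ONB => n.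
  apply: small0 => e' e'0.
  have [N HN] := Hs e' e'0.
  pose k := maxn N n.+1.
  have Nk : (N <= k)%N by rewrite leq_maxl.
  have nk : (n < k)%N by rewrite leq_max ltnSn orbT.
  have -> : x - s = (x - PS c k) + (PS c k - s) by rewrite addrA subrK.
  rewrite ipDl ipBl ip_PS_f nk subrr add0r.
  rewrite -(ltr_pXn2r (n:=2)) // ?nnegrE ?normr_ge0 ?ltW //.
  apply: le_lt_trans (coef_le _ _) _.
  by rewrite -hnorm_ltE //; apply: (HN k).
have [N HN] := Hs e e0.
exists N.
have -> : x - PS (fun i => ip x (f i)) N = - (PS c N - s) by rewrite opprB {1}xs.
by rewrite hnormN; apply: (HN N).
Qed.


Lemma closure_sub (T : op H) x y : T x y -> closure_op ip T x y.
Proof. by move=> h e e0; exists x, y; rewrite !subrr hnorm0; split. Qed.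

Lemma sum_delta_v (N i : nat) :
  (i < N)%N -> \sum_(k < N) (i == k)%:R *: f k = f i.
Proof.
elim: N => [//|N IH] iN; rewrite big_ord_recr /=.
case: (ltngtP i N) => h.
- by rewrite IH // scale0r addr0.
- by move: iN; rewrite ltnS leqNgt h.
- by rewrite h big1 ?add0r ?scale1r // => k _; rewrite (gtn_eqF (ltn_ord k)) scale0r.
Qed.

Lemma main_gen (phi psi : nat -> H) (D : H -> Prop) (alpha : nat -> C) :
  (forall n k, ip (psi n) (phi k) = (n == k)%:R) ->
  (forall n, D (psi n)) -> (forall x, D x -> Dseq ip phi x) ->
  (forall x, D x -> exists y, Hfa ip f alpha x y /\ D y) ->
  let T := closure_op ip (hrestrict (Tfphi ip f phi) D) in
  hdense ip (hspan (himage T D)) /\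
  in_L (comp_op T (comp_op (Hfa ip f alpha) (inv_op T))) (himage T D).
Proof.
move=> bio Dpsi D2 Hinv T.
have TD x : D x -> exists y, T x y /\ himage T D y.
  move=> Dx; have [y Hy] := @conv _ (D2 x Dx).
  have Txy : T x y by apply: closure_sub; split => //; split => //; apply: D2.
  by exists y; split => //; exists x.
split.
- move=> x e e0; have [N HN] := @approx x e e0.
  exists (PS (fun i => ip x (f i)) N); split => //.
  exists N, (fun i => ip x (f i)), (fun i => f i); split => //.
  move=> i; exists (psi i); split => //.
  apply: closure_sub; split => //; split; first exact: D2.
  move=> e' e'0; exists i.+1 => n hn.
  have -> : \sum_(k < n) ip (psi i) (phi k) *: f k = f i.
    rewrite -(@sum_delta_v n i) //; apply: eq_bigr => k _; by rewrite bio.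
  by rewrite subrr hnorm0.
- move=> y [x [Dx Txy]]; have [w [Hw Dw]] := Hinv x Dx.
  have [z [Twz Hz]] := TD w Dw.
  by exists z; split => //; exists w; split => //; exists x; split.
Qed.

End Gen.

Theorem theorem4p6 (R : realType) (H : lmodType R[i]) (ip : H -> H -> R[i])
  (Hip : is_inner_product ip) (Hcomplete : hcomplete ip)
  (phi psi : nat -> H) (D E : H -> Prop)
  (Hbio : biorthogonal ip phi psi)
  (HDsub : subspace D) (HDdense : hdense ip D)
  (HEsub : subspace E) (HEdense : hdense ip E)
  (Hqb : quasi_basis ip phi psi D E)
  (HD1 : forall x, seq_span psi x -> D x) (HD2 : forall x, D x -> Dseq ip phi x)
  (HE1 : forall x, seq_span phi x -> E x) (HE2 : forall x, E x -> Dseq ip psi x)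
  (f g : nat -> H)
  (Hfpos : positive_op ip (closure_op ip (hrestrict (Tfphi ip f phi) D)))
  (Hfsa : selfadjoint ip (closure_op ip (hrestrict (Tfphi ip f phi) D)))
  (Hfcp : constructing_pair ip phi f (closure_op ip (hrestrict (Tfphi ip f phi) D)))
  (Hgpos : positive_op ip (closure_op ip (hrestrict (Tfphi ip g psi) E)))
  (Hgsa : selfadjoint ip (closure_op ip (hrestrict (Tfphi ip g psi) E)))
  (Hgcp : constructing_pair ip psi g (closure_op ip (hrestrict (Tfphi ip g psi) E))) :
  (forall alpha : nat -> R[i],
     (forall x, D x -> exists y, Hfa ip f alpha x y /\ D y) ->
     let Tphi := closure_op ip (hrestrict (Tfphi ip f phi) D) in
     hdense ip (hspan (himage Tphi D)) /\
     in_L (comp_op Tphi (comp_op (Hfa ip f alpha) (inv_op Tphi))) (himage Tphi D)) /\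
  (forall alpha : nat -> R[i],
     (forall x, E x -> exists y, Hfa ip g alpha x y /\ E y) ->
     let Tpsi := closure_op ip (hrestrict (Tfphi ip g psi) E) in
     hdense ip (hspan (himage Tpsi E)) /\
     in_L (comp_op Tpsi (comp_op (Hfa ip g alpha) (inv_op Tpsi))) (himage Tpsi E)).
Proof.
have ON1 := Hfcp.1; have ON2 := Hgcp.1.
split.
- move=> alpha Hal.
  apply: (@main_gen _ _ ip Hip f ON1.1 Hcomplete (@MCP_Ri R) ON1.2 phi psi D alpha) => //.
  + by move=> n k; rewrite ipC // Hbio conjC_nat eq_sym.
  + move=> n; apply: HD1; exists 1%N, (fun _ => 1), (fun _ => psi n); split.
      by move=> i; exists n.
    by rewrite big_ord1 scale1r.
- move=> alpha Hal.
  apply: (@main_gen _ _ ip Hip g ON2.1 Hcomplete (@MCP_Ri R) ON2.2 psi phi E alpha) => //.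
  move=> n; apply: HE1; exists 1%N, (fun _ => 1), (fun _ => phi n); split.
    by move=> i; exists n.
  by rewrite big_ord1 scale1r.
Qed.
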